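(* Let $(X,d)$ be a finite metric space which embeds stochastically into a finite family $\mathcal{Y}=(Y_i,d_i)_{i\in I}$ of metric spaces with distortion $D$, and suppose that for each $i\in I$ the space $Wa(Y_i)$ embeds bi-Lipschitz into $\ell^1$ with distortion $C_i\ge1$. Then $Wa(X)$ embeds bi-Lipschitz into $\ell^1$ with distortion at most $CD$, where $C=\max_{i\in I}C_i$.
   Context: For a metric space $(Y,d)$, $Wa(Y)$ is the set of Borel probability measures on $Y$ with finite first moment, with the Wasserstein distance $Wa(\mu,\nu)=\inf_\pi\int d(x,y)\,d\pi(x,y)$ over couplings $\pi$ (probability measures on $Y\times Y$ with marginals $\mu,\nu$). A metric space $(X,d)$ embeds stochastically with distortion $D\ge1$ into a finite family $(Y_i,d_i)_{i\in I}$ if there are $p_i\ge0$ with $\sum_ip_i=1$ and maps $f_i:X\to Y_i$ that are non-contracting ($d_i(f_i(x),f_i(y))\ge d(x,y)$) with $\sum_ip_id_i(f_i(x),f_i(y))\le D\,d(x,y)$ for all $x,y$. A map $f$ from a metric space $(Z,d)$ into a normed space is a bi-Lipschitz embedding with distortion at most $C$ if there is $s>0$ with $s\,d(x,y)\le\|f(x)-f(y)\|\le Cs\,d(x,y)$ for all $x,y\in Z$. *)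

(* Defs.v *)
From HB Require Import structures.
From mathcomp Require Import all_boot all_order all_algebra.
From mathcomp Require Import all_classical all_reals all_analysis.
Set Implicit Arguments.
Unset Strict Implicit.
Unset Printing Implicit Defensive.
Import Order.TTheory GRing.Theory Num.Theory.
Local Open Scope classical_set_scope.
Local Open Scope ring_scope.

Section Defs.
Variable R : realType.

Definition is_metric (Y : Type) (d : Y -> Y -> R) : Prop :=
  (forall x y, 0 <= d x y) /\ (forall x y, d x y = 0 <-> x = y) /\
  (forall x y, d x y = d y x) /\ (forall x y z, d x z <= d x y + d y z).

Definition metric_open (Y : Type) (d : Y -> Y -> R) : set (set Y) :=
  [set A | forall x, A x -> exists2 e : R, 0 < e & forall y, d x y < e -> A y].

Definition metric_open2 (Y : Type) (d : Y -> Y -> R) : set (set (Y * Y)) :=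
  [set A | forall z, A z -> exists2 e : R, 0 < e &
     forall w, d z.1 w.1 < e -> d z.2 w.2 < e -> A w].

Definition borelT (Y : pointedType) (d : Y -> Y -> R) :=
  g_sigma_algebraType (metric_open d).
Definition borelT2 (Y : pointedType) (d : Y -> Y -> R) :=
  g_sigma_algebraType (metric_open2 d).

Definition Wa_set (Y : pointedType) (d : Y -> Y -> R) :
    set (probability (borelT d) R) :=
  [set mu : probability (borelT d) R | exists x0 : Y, (\int[mu]_y (d x0 y)%:E < +oo)%E].

Definition coupling (Y : pointedType) (d : Y -> Y -> R)
    (mu nu : probability (borelT d) R) : set (probability (borelT2 d) R) :=
  [set pi : probability (borelT2 d) R | forall A : set Y, measurable (A : set (borelT d)) ->
     pi (fst @^-1` A) = mu A /\ pi (snd @^-1` A) = nu A].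

Definition Wa_dist (Y : pointedType) (d : Y -> Y -> R)
    (mu nu : probability (borelT d) R) : \bar R :=
  ereal_inf [set (\int[pi]_z (d z.1 z.2)%:E)%E | pi in coupling mu nu].

Definition l1norm (u : nat -> R) : \bar R := (\sum_(0 <= n <oo) `|u n|%:E)%E.

Definition embeds_l1 (Z : Type) (S : set Z) (dz : Z -> Z -> \bar R) (C : R) :=
  exists f : Z -> nat -> R,
    (forall z, S z -> (l1norm (f z) < +oo)%E) /\
    exists2 s : R, 0 < s & forall x y, S x -> S y ->
      (s%:E * dz x y <= l1norm (fun n => f x n - f y n)%R /\
       l1norm (fun n => f x n - f y n)%R <= (C * s)%:E * dz x y)%E.

Definition stoch_embed (X : Type) (dX : X -> X -> R) (I : finType)
    (Y : I -> Type) (dY : forall i, Y i -> Y i -> R) (D : R) :=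
  1 <= D /\
  exists (p : I -> R) (f : forall i, X -> Y i),
    [/\ (forall i, 0 <= p i), \sum_(i : I) p i = 1,
        (forall i x y, dX x y <= dY i (f i x) (f i y)) &
        (forall x y, \sum_(i : I) p i * dY i (f i x) (f i y) <= D * dX x y)].

End Defs.
Arguments Wa_set {R Y} d.
Arguments Wa_dist {R Y} d.
Arguments coupling {R Y} d.

(* Main.v *)
Require Import Defs.
From HB Require Import structures.
From mathcomp Require Import all_boot all_order all_algebra.
From mathcomp Require Import all_classical all_reals all_analysis.
From mathcomp Require Import measurable_realfun.
From mathcomp Require Import lra.
Import Order.TTheory GRing.Theory Num.Theory.
Local Open Scope classical_set_scope.
Local Open Scope ring_scope.
Set Implicit Arguments.
Unset Strict Implicit.
Section metric.
Variable R : realType.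
Variables (Y : pointedType) (d : Y -> Y -> R).
Hypothesis hd : is_metric d.
Lemma open2_meas (A : set (Y * Y)) : metric_open2 d A -> measurable (A : set (borelT2 d)).
Proof. by move=> hA; apply: sub_sigma_algebra. Qed.
Lemma open_meas (A : set Y) : metric_open d A -> measurable (A : set (borelT d)).
Proof. by move=> hA; apply: sub_sigma_algebra. Qed.

Lemma dist2_meas : measurable_fun [set: borelT2 d] (fun z : borelT2 d => (d z.1 z.2)%:E).
Proof.
have [d0 [dE [dC dT]]] := hd.
apply/measurable_EFinP.
apply: (@measurability _ _ (borelT2 d) R setT (fun z : borelT2 d => d z.1 z.2) (@RGenOInfty.G R)).
  exact: (RGenOInfty.measurableE R).
move=> _ [_ [x ->] <-]; rewrite setTI; apply: open2_meas.
move=> z /=; rewrite in_itv /= andbT => xz.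
exists ((d z.1 z.2 - x) / 2); first by rewrite divr_gt0 // subr_gt0.
move=> w h1 h2; rewrite in_itv /= andbT.
have t1 := dT z.1 w.1 z.2; have t2 := dT w.1 w.2 z.2.
rewrite (dC w.2 z.2) in t2.
lra.
Qed.

Lemma dist1_meas y0 : measurable_fun [set: borelT d] (fun y : borelT d => (d y0 y)%:E).
Proof.
have [d0 [dE [dC dT]]] := hd.
apply/measurable_EFinP.
apply: (@measurability _ _ (borelT d) R setT (fun y : borelT d => d y0 y) (@RGenOInfty.G R)).
  exact: (RGenOInfty.measurableE R).
move=> _ [_ [x ->] <-]; rewrite setTI; apply: open_meas.
move=> z /=; rewrite in_itv /= andbT => xz.
exists (d y0 z - x); first by rewrite subr_gt0.
move=> w h1; rewrite in_itv /= andbT.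
have t1 := dT y0 w z; rewrite (dC w z) in t1.
lra.
Qed.
Lemma neq_open (y : Y) : metric_open d [set z | z <> y].
Proof.
have [d0 [dE [dC dT]]] := hd.
move=> z /= zy; exists (d z y).
  by rewrite lt_neqAle d0 andbT; apply/eqP => /esym /dE.
move=> w hw wy; move: hw; rewrite wy ltxx //.
Qed.

Lemma set1_meas (y : Y) : measurable ([set y] : set (borelT d)).
Proof.
rewrite -[X in measurable X]setCK; apply: measurableC; apply: open_meas.
have -> : ~` [set y] = [set z | z <> y] by apply/seteqP; split.
exact: neq_open.
Qed.

Lemma fst_meas : measurable_fun setT (fst : borelT2 d -> borelT d).
Proof.
apply: (@measurability _ _ (borelT2 d) (borelT d) setT _ (metric_open d)) => //.
move=> _ [A hA <-]; rewrite setTI; apply: open2_meas.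
move=> z /= Az; have [e e0 he] := hA _ Az; exists e => // w h1 _; exact: he.
Qed.

Lemma snd_meas : measurable_fun setT (snd : borelT2 d -> borelT d).
Proof.
apply: (@measurability _ _ (borelT2 d) (borelT d) setT _ (metric_open d)) => //.
move=> _ [A hA <-]; rewrite setTI; apply: open2_meas.
move=> z /= Az; have [e e0 he] := hA _ Az; exists e => // w _ h2; exact: he.
Qed.

Lemma fst_pre (A : set Y) : measurable (A : set (borelT d)) ->
  measurable (fst @^-1` A : set (borelT2 d)).
Proof. by move=> mA; rewrite -[X in measurable X]setTI; apply: fst_meas. Qed.

Lemma snd_pre (A : set Y) : measurable (A : set (borelT d)) ->
  measurable (snd @^-1` A : set (borelT2 d)).
Proof. by move=> mA; rewrite -[X in measurable X]setTI; apply: snd_meas. Qed.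
End metric.

Section discrete.
Variable R : realType.
Variables (X : pointedType) (dX : X -> X -> R).
Hypothesis hdX : is_metric dX.
Hypothesis hX : finite_set [set: X].

Lemma allmeas (A : set X) : measurable (A : set (borelT dX)).
Proof.
have -> : A = \bigcup_(x in A) [set x].
  by apply/seteqP; split => [x Ax | _ [x Ax ->]] //; exists x.
apply: fin_bigcup_measurable; first exact: sub_finite_set hX.
by move=> x _; apply: set1_meas.
Qed.

Lemma allmeas2 (A : set (X * X)) : measurable (A : set (borelT2 dX)).
Proof.
have -> : A = \bigcup_(z in A) (fst @^-1` [set z.1] `&` snd @^-1` [set z.2]).
  apply/seteqP; split => [z Az | w [z Az [/= h1 h2]]]; first by exists z.
  by case: w h1 h2 => a b /= -> ->; case: z Az.
apply: fin_bigcup_measurable.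
  apply: sub_finite_set (finite_setX hX hX) => z _; by split.
move=> z _; apply: measurableI.
  by apply: fst_pre => //; apply: set1_meas.
by apply: snd_pre => //; apply: set1_meas.
Qed.

Lemma allmf d' (T : measurableType d') (h : borelT dX -> T) D : measurable_fun D h.
Proof. by move=> mD B mB; apply: allmeas. Qed.

Lemma allmf2 d' (T : measurableType d') (h : borelT2 dX -> T) D : measurable_fun D h.
Proof. by move=> mD B mB; apply: allmeas2. Qed.

End discrete.

Definition mkMF d d' (T : measurableType d) (T' : measurableType d') (f : T -> T')
  (mf : measurable_fun setT f) : {mfun T >-> T'} :=
  mfun_Sub (mem_set mf : f \in mfun).
Arguments mkMF {d d' T T' f} mf.

Definition pf d d' (T : measurableType d) (T' : measurableType d') (R : realType)
  (P : probability T R) (f : T -> T') (mf : measurable_fun setT f) : probability T' R :=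
  distribution P (mkMF mf).
Arguments pf {d d' T T' R} P {f} mf.

Lemma pfE d d' (T : measurableType d) (T' : measurableType d') (R : realType)
  (P : probability T R) (f : T -> T') (mf : measurable_fun setT f) A :
  pf P mf A = P (f @^-1` A).
Proof. by []. Qed.

Lemma fin_ub (R : realType) (T : choiceType) (A : set T) (h : T -> R) :
  finite_set A -> exists M, forall x, A x -> h x <= M.
Proof.
move=> /finite_fsetP [F ->]; exists (\big[Num.max/0]_(y <- finmap.enum_fset F) h y) => x Fx.
by apply: (le_bigmax_seq 0 x predT h) => //.
Qed.

Lemma Wa_ge0 (R : realType) (Y : pointedType) (d : Y -> Y -> R) mu nu :
  (forall x y, 0 <= d x y) -> (0 <= Wa_dist d mu nu)%E.
Proof.
move=> d0; apply: le_ereal_inf_tmp => _ [pi _ <-].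
by apply: integral_ge0 => z _; rewrite lee_fin.
Qed.

Section key.
Variable R : realType.
Variables (X : pointedType) (dX : X -> X -> R).
Hypothesis hdX : is_metric dX.
Hypothesis hX : finite_set [set: X].
Variables (Y : pointedType) (dY : Y -> Y -> R).
Hypothesis hdY : is_metric dY.
Variable f : X -> Y.
Hypothesis hf : forall x y, dX x y <= dY (f x) (f y).

Hypothesis mf : measurable_fun setT (f : borelT dX -> borelT dY).
Let ff (z : borelT2 dX) : borelT2 dY := (f z.1, f z.2).
Let mff : measurable_fun setT ff.
Proof. exact: allmf2. Qed.

Lemma Wb (mu nu : probability (borelT dX) R) pi : coupling dX mu nu pi ->
  (Wa_dist dY (pf mu mf) (pf nu mf) <= \int[pi]_z (dY (f z.1) (f z.2))%:E)%E.
Proof.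
move=> hpi.
have [d0 _] := hdY.
apply: (@le_trans _ _ (\int[pf pi mff]_z (dY z.1 z.2)%:E)%E).
  apply: ereal_inf_lbound.
  exists (pf pi mff); last reflexivity.
  move=> B mB.
  exact: (hpi (f @^-1` B) (allmeas hdX hX _)).
have h0 : {in setT, forall z : borelT2 dY, (0 <= (dY z.1 z.2)%:E)%E} by move=> z _; rewrite lee_fin.
have := ge0_integral_pushforward mff pi measurableT (dist2_meas hdY) h0.
rewrite preimage_setT => <-.
exact: lexx.
Qed.


Lemma finj : injective f.
Proof.
have [d0 [dE _]] := hdX; have [_ [dYE _]] := hdY.
move=> x y fxy; apply/dE/eqP; rewrite eq_le d0 andbT.
by have := hf x y; rewrite fxy (proj2 (dYE _ _) erefl).
Qed.

Definition g (y : Y) : X :=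
  match pselect (exists x, f x = y) with
  | left h => projT1 (cid h)
  | right _ => point
  end.

Lemma gf x : g (f x) = x.
Proof.
rewrite /g; case: pselect => [h|n]; last by exfalso; apply: n; exists x.
by apply: finj; rewrite (projT2 (cid h)).
Qed.

Lemma g_nrange y : ~ range f y -> g y = point.
Proof.
move=> ny; rewrite /g; case: pselect => // -[x fx].
by exfalso; apply: ny; exists x.
Qed.

Lemma ncomp_meas : measurable (~` range f : set (borelT dY)).
Proof.
have -> : ~` range f = \bigcap_(x in setT) [set y | y <> f x].
  apply/seteqP; split => [y ny x _ /= yfx | y hy [x _ fxy]].
    by apply: ny; exists x.
  exact: (hy x I (esym fxy)).
apply: fin_bigcap_measurable => // x _.
by apply: open_meas; apply: neq_open.
Qed.

Lemma mg : measurable_fun setT (g : borelT dY -> borelT dX).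
Proof.
move=> _ B _; rewrite setTI.
have -> : g @^-1` B = \bigcup_(x in B) [set f x] `|` (~` range f `&` [set _ | B point]).
  apply/seteqP; split => y /=.
    have [[x _ <-]|ny] := pselect (range f y).
      by rewrite gf => Bx; left; exists x.
    by rewrite g_nrange // => Bp; right.
  case => [[x Bx /= ->]|[ny Bp]]; first by rewrite gf.
  by rewrite g_nrange.
apply: measurableU.
  apply: fin_bigcup_measurable; first exact: sub_finite_set hX.
  by move=> x _; apply: set1_meas.
apply: measurableI; first exact: ncomp_meas.
have [Bp|nBp] := pselect (B point).
  by have -> : [set _ | B point] = setT :> set Y by apply/seteqP; split.
by have -> : [set _ | B point] = set0 :> set Y by apply/seteqP; split.
Qed.

Lemma mgpre (A : set X) : measurable (g @^-1` A : set (borelT dY)).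
Proof. by rewrite -[X in measurable X]setTI; apply: mg => //; apply: allmeas. Qed.

Let gg (z : borelT2 dY) : borelT2 dX := (g z.1, g z.2).

Lemma mgg : measurable_fun setT gg.
Proof.
move=> _ A _; rewrite setTI.
have -> : gg @^-1` A = \bigcup_(a in setT)
    (fst @^-1` (g @^-1` [set a]) `&` snd @^-1` (g @^-1` [set b | A (a, b)])).
  apply/seteqP; split => z /=.
    by move=> Az; exists (g z.1) => //.
  by move=> [a _ [/= <- Ab]].
apply: fin_bigcup_measurable => // a _; apply: measurableI.
  exact: fst_pre (mgpre _).
exact: snd_pre (mgpre _).
Qed.

Lemma Wa (mu nu : probability (borelT dX) R) :
  (Wa_dist dX mu nu <= Wa_dist dY (pf mu mf) (pf nu mf))%E.
Proof.
have [d0 _] := hdY.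
have [dX0 _] := hdX.
apply: le_ereal_inf_tmp => _ [pi' hpi' <-].
apply: (@le_trans _ _ (\int[pf pi' mgg]_z (dX z.1 z.2)%:E)%E).
  apply: ereal_inf_lbound; exists (pf pi' mgg); last reflexivity.
  move=> A mA.
  have [h1 h2] := hpi' (g @^-1` A) (mgpre A).
  have eA : f @^-1` (g @^-1` A) = A by apply/seteqP; split=> x /=; rewrite gf.
  split.
    change (pi' (fst @^-1` (g @^-1` A)) = mu A); rewrite h1.
    by change (mu (f @^-1` (g @^-1` A)) = mu A); rewrite eA.
  change (pi' (snd @^-1` (g @^-1` A)) = nu A); rewrite h2.
  by change (nu (f @^-1` (g @^-1` A)) = nu A); rewrite eA.
have h0 : {in setT, forall z : borelT2 dX, (0 <= (dX z.1 z.2)%:E)%E}.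
  by move=> z _; rewrite lee_fin.
have mdX : measurable_fun setT (fun z : borelT2 dX => (dX z.1 z.2)%:E).
  exact: (allmf2 hdX hX).
have := ge0_integral_pushforward mgg pi' measurableT mdX h0.
rewrite preimage_setT => E.
apply: (@le_trans _ _ (\int[pushforward pi' gg]_z (dX z.1 z.2)%:E)%E).
  exact: lexx.
rewrite E.
apply: ae_ge0_le_integral => //.
- by move=> z _; rewrite lee_fin.
- exact: measurableT_comp mdX mgg.
- by move=> z _; rewrite lee_fin.
- exact: dist2_meas.
exists (fst @^-1` (~` range f) `|` snd @^-1` (~` range f)); split.
- by apply: measurableU; [exact: fst_pre ncomp_meas|exact: snd_pre ncomp_meas].
- apply/eqP; rewrite eq_le measure_ge0 andbT.
  apply: le_trans (measureU2 _ _ _) _.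
  + exact: fst_pre ncomp_meas.
  + exact: snd_pre ncomp_meas.
  have [h1 _] := hpi' _ ncomp_meas.
  have [_ h2] := hpi' _ ncomp_meas.
  have e0 : f @^-1` (~` range f) = set0.
    by apply/seteqP; split => x //= []; exists x.
  have z1 : (pi' (fst @^-1` (~` range f)) <= 0)%E.
    rewrite h1; change (mu (f @^-1` (~` range f)) <= 0)%E.
    by rewrite e0 measure0.
  have z2 : (pi' (snd @^-1` (~` range f)) <= 0)%E.
    rewrite h2; change (nu (f @^-1` (~` range f)) <= 0)%E.
    by rewrite e0 measure0.
  rewrite -(adde0 0%E); apply: leeD; [exact: z1|exact: z2].
- move=> z Hz; apply: contra_notP Hz => /not_orP [/contrapT [a _ ea] /contrapT [b _ eb]] _.
  by rewrite /comp /gg /= -ea -eb !gf lee_fin.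
Qed.

Lemma WaS (mu : probability (borelT dX) R) : Wa_set dY (pf mu mf).
Proof.
have [d0 _] := hdY.
exists (f point).
have h0 : {in setT, forall y : borelT dY, (0 <= (dY (f point) y)%:E)%E}.
  by move=> z _; rewrite lee_fin.
have := ge0_integral_pushforward mf mu measurableT (dist1_meas hdY (f point)) h0.
rewrite preimage_setT => E.
apply: (@le_lt_trans _ _ (\int[pushforward mu (f : borelT dX -> borelT dY)]_y (dY (f point) y)%:E)%E).
  exact: lexx.
rewrite E.
have [M hM] := fin_ub (fun x => dY (f point) (f x)) hX.
apply: (@le_lt_trans _ _ (\int[mu]_x (M%:E))%E).
  apply: ge0_le_integral => //.
  all: try (by move=> z _; rewrite lee_fin).
  all: try (exact: (allmf hdX hX)).
  all: try (by move=> x _; rewrite lee_fin; apply: hM).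
rewrite integral_cst //.
have h1 : (M%:E * mu setT = M%:E)%E by rewrite probability_setT mule1.
move: h1 => /eqP; rewrite eq_le => /andP[h1 _].
exact: (le_lt_trans h1 (ltry _)).
Qed.

End key.

Section interleave.
Variable R : realType.
Variables (I : finType) (i0 : I).
Let e := enum I.
Let k := size e.
Let kpos : (0 < k)%N.
Proof. by rewrite /k /e -cardE; apply/card_gt0P; exists i0. Qed.

Definition il (b : I -> nat -> R) (n : nat) : R := b (nth i0 e (n %% k)%N) (n %/ k)%N.

Lemma shift_series (r : nat) (c : nat -> \bar R) : (r < k)%N -> (forall m, 0 <= c m)%E ->
  (\sum_(n <oo) (if (r == n %% k)%N then c (n %/ k)%N else 0))%E = (\sum_(m <oo) c m)%E.
Proof.
move=> rk c0.
rewrite !nneseries_esumT; last 2 first.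
- by [].
- by move=> n; case: ifP.
have -> : (\esum_(n in [set: nat]) (if (r == n %% k)%N then c (n %/ k)%N else 0))%R =
   (\esum_(n in [set n | r = (n %% k)%N]) c (n %/ k)%N)%R.
  rewrite [RHS]esum_mkcond; apply: eq_esum => n _.
  by case: eqP => h; [rewrite mem_set|rewrite memNset].
have -> : [set n | r = (n %% k)%N] = (fun m => m * k + r)%N @` setT.
  apply/seteqP; split => n /=.
    move=> rn; exists (n %/ k)%N => //; by rewrite rn -divn_eq.
  by move=> [m _ <-]; rewrite modnMDl modn_small.
rewrite esum_image; last first.
  by move=> m1 m2 _ _ /= /addIn /eqP; rewrite eqn_pmul2r // => /eqP.
by apply: eq_esum => m _; rewrite divnMDl // divn_small // addn0.
Qed.

Lemma l1_il b : l1norm (il b) = (\sum_(i : I) l1norm (b i))%E.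
Proof.
rewrite /l1norm.
have E n : (`|il b n|%:E = \sum_(i : I)
    (if (index i e == n %% k)%N then `|b i (n %/ k)%N|%:E else 0))%E.
  rewrite (bigD1 (nth i0 e (n %% k)%N)) //= index_uniq ?ltn_pmod ?enum_uniq // eqxx.
  rewrite big1 ?adde0 // => i ni; case: eqP => // ei.
  by move: ni; rewrite -ei nth_index ?mem_enum ?eqxx.
rewrite (eq_eseriesr (fun n _ => E n)).
rewrite nneseries_sum; last by move=> i j _; case: ifP.
apply: eq_bigr => i _.
apply: shift_series => //.
by rewrite /k index_mem mem_enum.
Qed.

End interleave.

Lemma l1Z (R : realType) (c : R) (u : nat -> R) : 0 <= c ->
  l1norm (fun n => c * u n) = (c%:E * l1norm u)%E.
Proof.
move=> c0; rewrite /l1norm -nneseriesZl //.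
by apply: eq_eseriesr => n _; rewrite normrM ger0_norm.
Qed.

Unset Implicit Arguments.

Theorem corollary3 (R : realType) (X : pointedType) (dX : X -> X -> R)
  (I : finType) (Y : I -> pointedType) (dY : forall i, Y i -> Y i -> R)
  (D : R) (C : I -> R) :
  finite_set [set: X] ->
  is_metric dX -> (forall i, is_metric (dY i)) ->
  stoch_embed dX dY D ->
  (forall i, 1 <= C i) ->
  (forall i, embeds_l1 (Wa_set (dY i)) (Wa_dist (dY i)) (C i)) ->
  embeds_l1 (Wa_set dX) (Wa_dist dX) ((\big[Num.max/1]_(i : I) C i) * D).
Proof.
move=> hX hdX hdY [D1 [p [f [p0 psum hf hD]]]] C1 emb.
have i0 : I.
  case: (pickP (@predT I)) => [i _|h]; first exact i.
  exfalso; move: psum; rewrite big_pred0 // => /eqP; by rewrite eq_sym oner_eq0.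
pose G i := projT1 (cid (emb i)).
have hG i := projT2 (cid (emb i)).
have H : forall i, exists si : R, 0 < si /\ forall x y, Wa_set (dY i) x -> Wa_set (dY i) y ->
      ((si)%:E * Wa_dist (dY i) x y <= l1norm (fun n => G i x n - G i y n)%R /\
       l1norm (fun n => G i x n - G i y n)%R <= (C i * si)%:E * Wa_dist (dY i) x y)%E.
  move=> i; have [_ [si si0 hsi]] := hG i; by exists si.
have [s hs] := choice H.
have mf i : measurable_fun setT (f i : borelT dX -> borelT (dY i)) by exact: allmf.
pose push i (mu : probability (borelT dX) R) : probability (borelT (dY i)) R := pf mu (mf i).
pose F (mu : probability (borelT dX) R) := il i0 (fun i m => p i / s i * G i (push i mu) m).
have c0 i : 0 <= p i / s i by rewrite divr_ge0 // ltW //; case: (hs i).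
exists F; split.
  move=> mu _; rewrite /F l1_il.
  apply: lte_sum_pinfty => i _; rewrite l1Z //.
  apply: lte_mul_pinfty => //; first by rewrite lee_fin.
  have [hfin _] := hG i; apply: hfin.
  exact: WaS.
exists 1 => // mu nu Smu Snu.
pose Wi i := Wa_dist (dY i) (push i mu) (push i nu).
pose Li i := l1norm (fun m => G i (push i mu) m - G i (push i nu) m).
have Ediff : (fun n => F mu n - F nu n) =
    il i0 (fun i m => p i / s i * (G i (push i mu) m - G i (push i nu) m)).
  by apply/funext => n; rewrite /F /il mulrBr.
rewrite Ediff l1_il.
rewrite (eq_bigr (fun i => (p i / s i)%:E * Li i)%E); last by move=> i _; rewrite l1Z.
have W0 : (0 <= Wa_dist dX mu nu)%E by apply: Wa_ge0; case: hdX.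
have Wi0 i : (0 <= Wi i)%E by apply: Wa_ge0; case: (hdY i).
have WaI i : (Wa_dist dX mu nu <= Wi i)%E by exact: (Wa hdX hX (hdY i) (hf i) (mf i)).
have hb i : ((s i)%:E * Wi i <= Li i /\ Li i <= (C i * s i)%:E * Wi i)%E.
  have [_ hsi] := hs i; apply: hsi.
    exact: (WaS hdX hX (hdY i) (mf i)).
  exact: (WaS hdX hX (hdY i) (mf i)).
have si0 i : s i != 0 by rewrite gt_eqF //; case: (hs i).
split.
  rewrite mul1e.
  apply: (@le_trans _ _ (\sum_(i : I) (p i)%:E * Wa_dist dX mu nu)%E).
    rewrite -ge0_sume_distrl; last by move=> i _; rewrite lee_fin.
    by rewrite sumEFin psum mul1e.
  apply: lee_sum => i _.
  apply: (@le_trans _ _ ((p i)%:E * Wi i)%E).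
    by apply: lee_wpmul2l; [rewrite lee_fin|apply: WaI].
  have -> : ((p i)%:E * Wi i = (p i / s i)%:E * ((s i)%:E * Wi i))%E.
    by rewrite muleA -EFinM divfK.
  by apply: lee_wpmul2l; [rewrite lee_fin|exact: (proj1 (hb i))].
pose Cm := \big[Num.max/1]_(i : I) C i.
have CmC i : C i <= Cm by exact: le_bigmax.
have Cm0 : 0 <= Cm by apply: le_trans (CmC i0); apply: le_trans (C1 i0).
have D0 : 0 < D by apply: lt_le_trans D1.
apply: (@le_trans _ _ (\sum_(i : I) (Cm%:E * ((p i)%:E * Wi i)))%E).
  apply: lee_sum => i _.
  apply: (@le_trans _ _ ((p i / s i)%:E * ((C i * s i)%:E * Wi i))%E).
    by apply: lee_wpmul2l; [rewrite lee_fin|exact: (proj2 (hb i))].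
  rewrite !muleA -!EFinM.
  apply: lee_wpmul2r => //; rewrite lee_fin.
  rewrite [C i * s i]mulrC mulrA divfK // mulrC.
  by apply: ler_wpM2r.
rewrite -ge0_sume_distrr; last by move=> i _; apply: mule_ge0 => //; rewrite lee_fin.
rewrite mulr1 EFinM -muleA.
apply: lee_wpmul2l; first by rewrite lee_fin.
rewrite [in X in (_ <= X)%E]/Wa_dist -ereal_inf_pZl //.
apply: le_ereal_inf_tmp => _ [_ [pi hpi <-] <-].
apply: (@le_trans _ _ (\sum_(i : I) (p i)%:E * \int[pi]_z (dY i (f i z.1) (f i z.2))%:E)%E).
  apply: lee_sum => i _; apply: lee_wpmul2l; first by rewrite lee_fin.
  exact: (Wb hdX hX (hdY i) (mf i) hpi).
rewrite (eq_bigr (fun i => \int[pi]_z ((p i * dY i (f i z.1) (f i z.2))%:E))%E); last first.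
  move=> i _; rewrite -ge0_integralZl //.
  all: try (by apply: eq_integral => z _; rewrite EFinM).
  all: try (exact: (allmf2 hdX hX)).
  all: try (by move=> z _; have [d0 _] := hdY i; rewrite lee_fin).
  all: try (by rewrite lee_fin).
rewrite -ge0_integral_sum //; last first.
  - by move=> i z _; have [d0 _] := hdY i; rewrite lee_fin mulr_ge0.
  - by move=> i; exact: (allmf2 hdX hX).
rewrite -ge0_integralZl //; last first.
  - by rewrite lee_fin ltW.
  - by move=> z _; have [d0 _] := hdX; rewrite lee_fin.
  - exact: (allmf2 hdX hX).
apply: ge0_le_integral => //.
- by move=> z _; apply: sume_ge0 => i _; have [d0 _] := hdY i; rewrite lee_fin mulr_ge0.
- exact: (allmf2 hdX hX).
- exact: (allmf2 hdX hX).
- by move=> z _; rewrite sumEFin -EFinM lee_fin; apply: hD.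
Qed.
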